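(* It holds that $$\mathrm{cl}\,\mathrm{conv}(P^B\setminus C)=\mathrm{cl}\,\mathrm{conv}(P^B\setminus T^C)=\mathrm{cl}\,\mathrm{conv}(P^B\setminus R^C).$$
   Context: Let $A\in\mathbb{R}^{m\times n}$ have full row rank, $b\in\mathbb{R}^m$, and $P=\{x\in\mathbb{R}^n_+ : Ax=b\}$. Let $C\subseteq\mathbb{R}^n$ be an open convex set. Fix a basis $B$ of $P$ with nonbasic set $N=\{1,\dots,n\}\setminus B$. Write $P=\{x: x_i=\bar b_i-\sum_{j\in N}\bar a_{ij}x_j\ (i\in B),\ x_j\ge0\ (j=1,\dots,n)\}$ with $\bar b\ge0$. The basic solution $\bar x$ has $\bar x_i=\bar b_i$ ($i\in B$) and $\bar x_i=0$ ($i\in N$). $P^B$ is obtained by dropping $x_i\ge0$ for $i\in B$. For $j\in N$, $\bar r^j$ has $\bar r^j_k=-\bar a_{kj}$ ($k\in B$), $\bar r^j_j=1$, and $\bar r^j_k=0$ otherwise. Thus $P^B=\{\bar x+\sum_{j\in N}x_j\bar r^j:x_j\ge0\}$. It is assumed that $\bar x\notin\mathrm{cl}(C)$. For $j\in N$, $\alpha_j=\inf\{\lambda\ge0:\bar x+\lambda\bar r^j\in C\}$ and $\beta_j=\sup\{\lambda\ge0:\bar x+\lambda\bar r^j\in C\}$, with $\alpha_j=+\infty$, $\beta_j=-\infty$ if that halfline misses $C$. The set $N$ is partitioned into - $N_0=\{j:\alpha_j=+\infty,\beta_j=-\infty\}$, - $N_1=\{j:\alpha_j\in(0,\infty),\beta_j=+\infty\}$,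 - $N_2=\{j:\alpha_j\in(0,\infty),\beta_j\in(\alpha_j,\infty)\}$. For a set $K$, $\mathrm{recc}(K)=\{d:x+\lambda d\in K\ \forall x\in K,\lambda\ge0\}$. Define - $T=\{\bar x\}+\mathrm{conv}\big(\bigcup_{j\in N_1\cup N_2}\{\lambda\bar r^j:\alpha_j<\lambda<\beta_j\}\big)$ and $T^C=T+\mathrm{recc}(C)$; - $R=\{\bar x\}+\mathrm{conv}\big(\bigcup_{j\in N_1}\{\lambda\bar r^j:\alpha_j<\lambda<\beta_j\}\big)$ and $R^C=R+\mathrm{recc}(C)$. Here $\mathrm{cl}\,\mathrm{conv}$ denotes the closure of the convex hull. *)

(* Defs.v *)
(* Points of R^n are column vectors 'cV[R]_n,
   with the (product/sup-norm) topology of matrix_normedtype. *)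
From HB Require Import structures.
From mathcomp Require Import all_boot all_order all_algebra.
From mathcomp Require Import all_classical all_reals all_analysis.
Set Implicit Arguments. Unset Strict Implicit. Unset Printing Implicit Defensive.
Import Order.TTheory GRing.Theory Num.Theory numFieldNormedType.Exports.
Local Open Scope classical_set_scope.
Local Open Scope ring_scope.

Section Defs.
Variable R : realType.

Definition is_convex {n : nat} (S : set 'cV[R]_n) : Prop :=
  forall x y (t : R), S x -> S y -> 0 <= t -> t <= 1 -> S (t *: x + (1 - t) *: y).

Definition convhull {n : nat} (S : set 'cV[R]_n) : set 'cV[R]_n :=
  [set x | exists (k : nat) (p : 'I_k -> 'cV[R]_n) (w : 'I_k -> R),
     [/\ forall i, S (p i), forall i, 0 <= w i, \sum_(i < k) w i = 1
       & x = \sum_(i < k) w i *: p i]].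

Definition recc {n : nat} (K : set 'cV[R]_n) : set 'cV[R]_n :=
  [set d | forall x (l : R), K x -> 0 <= l -> K (x + l *: d)].

Definition msum {n : nat} (S T : set 'cV[R]_n) : set 'cV[R]_n :=
  [set x + y | x in S & y in T].

Variables (m n : nat) (A : 'M[R]_(m, n)) (b : 'cV[R]_m) (f : 'I_m -> 'I_n).
(* The basis B = image of the injective f; f i is the basic variable of row i. *)
Definition basisB : set 'I_n := [set f i | i in [set: 'I_m]].
Definition nonbasic : set 'I_n := ~` basisB.

Definition AB : 'M[R]_m := colsub f A.
Definition abar : 'M[R]_(m, n) := invmx AB *m A.
Definition bbar : 'cV[R]_m := invmx AB *m b.

Definition xbar : 'cV[R]_n :=
  \col_k (if [pick i | f i == k] is Some i then bbar i 0 else 0).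

Definition rbar (j : 'I_n) : 'cV[R]_n :=
  \col_k (if [pick i | f i == k] is Some i then - abar i j
          else if k == j then 1 else 0).

(* P^B : drop x_i >= 0 for basic i *)
Definition PB : set 'cV[R]_n :=
  [set x | A *m x = b /\ forall j, nonbasic j -> 0 <= x j 0].

Variable C : set 'cV[R]_n.

Definition alpha (j : 'I_n) : \bar R :=
  ereal_inf [set (l%:E) | l in [set l : R | 0 <= l /\ C (xbar + l *: rbar j)]].
Definition beta (j : 'I_n) : \bar R :=
  ereal_sup [set (l%:E) | l in [set l : R | 0 <= l /\ C (xbar + l *: rbar j)]].

Definition N0 : set 'I_n :=
  [set j | nonbasic j /\ alpha j = +oo%E /\ beta j = -oo%E].
Definition N1 : set 'I_n :=
  [set j | nonbasic j /\ (0 < alpha j < +oo)%E /\ beta j = +oo%E].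
Definition N2 : set 'I_n :=
  [set j | nonbasic j /\ (0 < alpha j < +oo)%E /\ (alpha j < beta j < +oo)%E].

Definition segs (J : set 'I_n) : set 'cV[R]_n :=
  [set v | exists j, exists l : R,
     [/\ J j, (alpha j < l%:E)%E, (l%:E < beta j)%E & v = l *: rbar j]].

Definition Tset : set 'cV[R]_n := [set xbar + v | v in convhull (segs (N1 `|` N2))].
Definition TC : set 'cV[R]_n := msum Tset (recc C).
Definition Rset : set 'cV[R]_n := [set xbar + v | v in convhull (segs N1)].
Definition RC : set 'cV[R]_n := msum Rset (recc C).

End Defs.

(* Main.v *)
Require Import Defs.
From HB Require Import structures.
From mathcomp Require Import all_boot all_order all_algebra.
From mathcomp Require Import all_classical all_reals all_analysis.
From mathcomp Require Import ring lra.
Import Order.TTheory GRing.Theory Num.Theory numFieldNormedType.Exports.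
Local Open Scope classical_set_scope.
Local Open Scope ring_scope.

Section Convex.
Variable R : realType.
Variable n : nat.
Local Notation V := 'cV[R]_n.

Lemma sub_convhull (S : set V) : S `<=` convhull S.
Proof.
move=> x Sx; exists 1%N, (fun=> x), (fun=> 1); split => //.
- by rewrite big_ord1.
- by rewrite big_ord1 scale1r.
Qed.

Lemma convhull_mono (S S' : set V) : S `<=` S' -> convhull S `<=` convhull S'.
Proof.
move=> SS' x [k [p [w [Sp w0 w1 ->]]]]; exists k, p, w; split => // i; exact: SS'.
Qed.

Lemma convhull_sub (S Y : set V) : is_convex Y -> S `<=` Y -> convhull S `<=` Y.
Proof.
move=> cY SY x [k [p [w [Sp w0 w1 ->]]]].
elim: k p w Sp w0 w1 => [|k IH] p w Sp w0 w1.
  by move: w1; rewrite big_ord0 => /eqP; rewrite eq_sym oner_eq0.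
rewrite big_ord_recl; rewrite big_ord_recl in w1.
have wr0 : 0 <= \sum_(i < k) w (lift ord0 i) by apply: sumr_ge0 => i _; exact: w0.
have w0le1 : w ord0 <= 1 by rewrite -w1 lerDl.
have [w01|w0ne1] := eqVneq (w ord0) 1.
  have Hz : \sum_(i < k) w (lift ord0 i) = 0.
    by move: w1; rewrite w01 => h; lra.
  rewrite big1.
    by rewrite addr0 w01 scale1r; apply: SY.
  by move=> i _; rewrite (psumr_eq0P (fun i _ => w0 (lift ord0 i)) Hz) // scale0r.
set s := 1 - w ord0.
have s0 : 0 < s by rewrite subr_gt0 lt_neqAle w0ne1 w0le1.
have hs : \sum_(i < k) w (lift ord0 i) = s by rewrite /s -w1; ring.
pose w' i := w (lift ord0 i) / s.
have y_in : Y (\sum_(i < k) w' i *: p (lift ord0 i)).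
  apply: (IH (fun i => p (lift ord0 i)) w') => //.
  - by move=> i; rewrite /w' divr_ge0 ?w0 ?ltW.
  - by rewrite /w' -mulr_suml hs divff // gt_eqF.
have -> : \sum_(i < k) w (lift ord0 i) *: p (lift ord0 i) =
    s *: \sum_(i < k) w' i *: p (lift ord0 i).
  rewrite scaler_sumr; apply: eq_bigr => i _.
  by rewrite scalerA /w' mulrC divfK // gt_eqF.
exact: cY (SY _ (Sp _)) y_in (w0 _) w0le1.
Qed.

Lemma convhull_convex (S : set V) : is_convex (convhull S).
Proof.
move=> x y t [k1 [p1 [w1 [S1 w10 w11 ->]]]] [k2 [p2 [w2 [S2 w20 w21 ->]]]] t0 t1.
have E1 : forall i, fintype.split (lshift k2 i) = inl i := fun i => unsplitK (inl i).
have E2 : forall i, fintype.split (rshift k1 i) = inr i := fun i => unsplitK (inr i).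
exists (k1 + k2)%N, (fun i => match fintype.split i with inl a => p1 a | inr b => p2 b end),
  (fun i => match fintype.split i with inl a => t * w1 a | inr b => (1 - t) * w2 b end).
split.
- by move=> i; case: (fintype.split i).
- by move=> i; case: (fintype.split i) => a; apply: mulr_ge0 => //; rewrite subr_ge0.
- rewrite big_split_ord /=.
  under eq_bigr do rewrite E1.
  under [X in _ + X]eq_bigr do rewrite E2.
  by rewrite -!mulr_sumr w11 w21 !mulr1 addrC subrK.
- rewrite big_split_ord /= !scaler_sumr; congr (_ + _); apply: eq_bigr => i _.
    by rewrite E1 scalerA.
  by rewrite E2 scalerA.
Qed.

Lemma closure_convex (Y : set V) : is_convex Y -> is_convex (closure Y).
Proof.
move=> cY x y t cx cy t0 t1 B /nbhs_ballP[e /= e0 eB].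
have [x' [Yx' bx']] := cx _ (nbhsx_ballx x e e0).
have [y' [Yy' by']] := cy _ (nbhsx_ballx y e e0).
exists (t *: x' + (1 - t) *: y'); split; first exact: cY.
apply: eB; move: bx' by'; rewrite -ball_normE /= => bx by'.
have -> : t *: x + (1 - t) *: y - (t *: x' + (1 - t) *: y') =
   t *: (x - x') + (1 - t) *: (y - y').
  by rewrite opprD addrACA -!scalerBr.
apply: (le_lt_trans (ler_normD _ _)); rewrite !normrZ !ger0_norm ?subr_ge0 //.
have hM : Num.max `|x - x'| `|y - y'| < e by rewrite gt_max bx by'.
have h1 : t * `|x - x'| <= t * Num.max `|x - x'| `|y - y'|.
  by rewrite ler_wpM2l // le_max lexx.
have h2 : (1 - t) * `|y - y'| <= (1 - t) * Num.max `|x - x'| `|y - y'|.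
  by rewrite ler_wpM2l ?subr_ge0 // le_max lexx orbT.
lra.
Qed.

Lemma cont_sum (T : topologicalType) (I : Type) (r : seq I) (P : pred I)
   (F : I -> T -> R) : (forall i, continuous (F i)) ->
  continuous (fun x => \sum_(i <- r | P i) F i x).
Proof.
move=> HF; elim: r => [|a r IH].
  have -> : (fun x => \sum_(i <- [::] | P i) F i x) = (fun=> 0) by apply: funext => x; rewrite big_nil.
  exact: cst_continuous.
case Pa : (P a).
  have -> : (fun x => \sum_(i <- a :: r | P i) F i x) = (F a + (fun x => \sum_(i <- r | P i) F i x)).
    by apply: funext => x; rewrite big_cons Pa.
  move=> x; exact: (continuousD (HF a x) (IH x)).
have -> : (fun x => \sum_(i <- a :: r | P i) F i x) = (fun x => \sum_(i <- r | P i) F i x).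
  by apply: funext => x; rewrite big_cons Pa.
exact: IH.
Qed.

End Convex.

Section Sep.
Variable R : realType.
Variable n : nat.
Local Notation V := 'cV[R]_n.

Definition dot (c y : V) : R := \sum_i c i 0 * y i 0.

Lemma trmx_continuous (p q : nat) : continuous (@trmx R p q).
Proof.
move=> M; apply: (proj2 (@cvg_mx_entourageP _ q p (trmx @ nbhs M) _ M^T)) => A entA.
have H := @cvg_mx_entourageP _ _ _ (nbhs M) (nbhs_filter M) M.
have := proj1 H (@cvg_id _ (nbhs M)) A entA.
move=> h; apply: (filterS _ h) => N /= HN i j; rewrite !mxE; exact: HN j i.
Qed.

Lemma sq_le_sum (F : 'I_n -> R) i : (forall j, 0 <= F j) -> F i <= \sum_j F j.
Proof.
move=> F0; rewrite (bigD1 i) //= lerDl; apply: sumr_ge0 => j _; exact: F0.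
Qed.

Lemma separation (X : set V) (x x0 : V) : closed X -> is_convex X -> X x0 -> ~ X x ->
  exists c : V, forall q, X q -> dot c x < dot c q.
Proof.
move=> Xcl Xcv Xx0 nXx.
pose g (p : V) := \sum_i (p i 0 - x i 0) ^+ 2.
have g0 p : 0 <= g p by apply: sumr_ge0 => i _; exact: sqr_ge0.
have gcont : continuous g.
  apply: cont_sum => i p.
  have -> : (fun p : V => (p i 0 - x i 0) ^+ 2) = (fun p : V => p i 0 - x i 0) \* (fun p : V => p i 0 - x i 0).
    by apply: funext => q /=; rewrite expr2.
  have hc : {for p, continuous (fun p : V => p i 0 - x i 0)}.
    have -> : (fun p : V => p i 0 - x i 0) = (fun p : V => p i 0) + (fun=> - x i 0).
      by apply: funext.
    apply: continuousD; [exact: coord_continuous | exact: cst_continuous].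
  exact: continuousM.
pose rho := 1 + g x0.
pose box := [set p : V | forall i, `|p i 0 - x i 0| <= rho].
have box_cpt : compact box.
  have -> : box = [set v^T | v in [set v : 'rV[R]_n | forall i,
       (`[x i 0 - rho, x i 0 + rho]%classic : set R) (v ord0 i)]].
    apply/seteqP; split => [p bp | _ [v vb <-]].
      exists p^T; last by rewrite trmxK.
      move=> i; have := bp i; rewrite /= in_itv /= mxE distrC ler_distlC => h; exact: h.
    move=> i; have := vb i; rewrite /= in_itv /= mxE distrC ler_distlC => h; exact: h.
  apply: continuous_compact.
    apply: continuous_subspaceT; exact: trmx_continuous.
  have hh := @rV_compact R n (fun i => `[x i 0 - rho, x i 0 + rho]%classic) (fun i => @segment_compact R (x i 0 - rho) (x i 0 + rho)).
  exact hh.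
pose K := box `&` X.
have K_cpt : compact K by apply: compact_closedI.
have rho_ge : forall i, `|x0 i 0 - x i 0| <= rho.
  move=> i; have h1 : (x0 i 0 - x i 0) ^+ 2 <= g x0.
    by apply: (sq_le_sum (fun j => (x0 j 0 - x j 0) ^+ 2)) => j; exact: sqr_ge0.
  rewrite /rho; move: h1; rewrite -real_normK ?num_real //.
  have := normr_ge0 (x0 i 0 - x i 0); set u := `|_|; nra.
have Kx0 : K x0 by split => //; exact: rho_ge.
have [p Kp pmin] := compact_EVT_min (ex_intro _ x0 Kx0) K_cpt (continuous_subspaceT gcont).
move: Kp; rewrite inE => -[bp Xp].
have gp_le : g p <= g x0 by apply: pmin; rewrite inE.
have key : forall q, X q -> forall t, 0 < t -> t <= 1 ->
    g p <= g (t *: q + (1 - t) *: p).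
  move=> q Xq t t0 t1; set z := t *: q + (1 - t) *: p.
  have Xz : X z by apply: Xcv => //; exact: ltW.
  have [bz|nbz] := pselect (box z).
    by apply: pmin; rewrite inE.
  move/existsNP: nbz => [i /negP]; rewrite -ltNge => hi.
  apply: (le_trans gp_le).
  have h1 : (z i 0 - x i 0) ^+ 2 <= g z.
    by apply: (sq_le_sum (fun j => (z j 0 - x j 0) ^+ 2)) => j; exact: sqr_ge0.
  apply: (le_trans _ h1); rewrite -real_normK ?num_real //.
  move: hi; rewrite /rho; set u := `|_|; have := g0 x0; nra.
have lin : forall q, X q -> 0 <= \sum_i (q i 0 - p i 0) * (p i 0 - x i 0).
  move=> q Xq; set L := \sum_i _ ; set Q := \sum_i (q i 0 - p i 0) ^+ 2.
  have Q0 : 0 <= Q by apply: sumr_ge0 => i _; exact: sqr_ge0.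
  have expand : forall t, g (t *: q + (1 - t) *: p) = g p + 2 * t * L + t ^+ 2 * Q.
    move=> t; rewrite /g /L /Q !mulr_sumr -!big_split /=; apply: eq_bigr => i _.
    rewrite !mxE; ring.
  rewrite leNgt; apply/negP => L0.
  set t := - L / (Q - L).
  have QL0 : 0 < Q - L by lra.
  have t0 : 0 < t by rewrite /t divr_gt0 // oppr_gt0.
  have t1 : t <= 1 by rewrite /t ler_pdivrMr // mul1r; lra.
  have tQ : t * Q <= - L by rewrite /t mulrAC ler_pdivrMr //; nra.
  have := key q Xq t t0 t1; rewrite expand => h.
  have e2 : t ^+ 2 * Q = t * (t * Q) by ring.
  rewrite e2 in h; nra.
exists (p - x) => q Xq.
have pnx : p != x by apply/eqP => pe; apply: nXx; rewrite -pe.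
have [i0 hi0] : exists i, p i 0 != x i 0.
  apply: contrapT => h; move/eqP: pnx; apply; apply/matrixP => i j.
  rewrite (ord1 j); apply: contrapT => hne; apply: h; exists i; exact/eqP.
have gp_pos : 0 < g p.
  have h1 : (p i0 0 - x i0 0) ^+ 2 <= g p.
    by apply: (sq_le_sum (fun j => (p j 0 - x j 0) ^+ 2)) => j; exact: sqr_ge0.
  apply: lt_le_trans h1; by rewrite lt_def sqrf_eq0 subr_eq0 hi0 sqr_ge0.
rewrite -subr_gt0 /dot -sumrB.
have -> : \sum_i ((p - x) i 0 * q i 0 - (p - x) i 0 * x i 0) =
    \sum_i (q i 0 - p i 0) * (p i 0 - x i 0) + g p.
  rewrite /g -big_split /=; apply: eq_bigr => i _; rewrite !mxE; ring.
have := lin q Xq; lra.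
Qed.

Lemma dotD c u v : dot c (u + v) = dot c u + dot c v.
Proof. by rewrite /dot -big_split; apply: eq_bigr => i _; rewrite mxE mulrDr. Qed.

Lemma dotZ c a u : dot c (a *: u) = a * dot c u.
Proof. by rewrite /dot mulr_sumr; apply: eq_bigr => i _; rewrite mxE mulrCA. Qed.

Lemma dotB c u v : dot c (u - v) = dot c u - dot c v.
Proof. by rewrite /dot -sumrB; apply: eq_bigr => i _; rewrite !mxE mulrBr. Qed.

Lemma dot_sum c (F : 'I_n -> V) : dot c (\sum_j F j) = \sum_j dot c (F j).
Proof.
rewrite /dot; under eq_bigr do rewrite summxE mulr_sumr.
by rewrite exchange_big.
Qed.

Lemma open_recc (C : set V) p0 d : open C -> is_convex C ->
  (forall t, 0 <= t -> C (p0 + t *: d)) -> recc C d.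
Proof.
move=> Co Cc H y l Cy l0.
have nC : nbhs y C by have := Co; rewrite openE => /(_ _ Cy).
move/nbhs_ballP: nC => [e /= e0 eB].
set M := `|y - p0| + 1.
have M0 : 0 < M by rewrite /M ltr_wpDl.
set eta := e / (e + M).
have eM0 : 0 < e + M by rewrite addr_gt0.
have eta0 : 0 < eta by rewrite divr_gt0.
have eta1 : eta < 1 by rewrite /eta ltr_pdivrMr // mul1r ltrDl.
set y' := y + (eta / (1 - eta)) *: (y - p0).
have Cy' : C y'.
  apply: eB; rewrite -ball_normE /= /y' opprD addrA subrr add0r normrN normrZ ger0_norm; last first.
    by apply: divr_ge0; [exact: ltW | rewrite subr_ge0 ltW].
  have -> : eta / (1 - eta) = e / M.
    rewrite /eta; field; rewrite ?gt_eqF //.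
  have hM : `|y - p0| < M by rewrite /M ltrDl.
  by rewrite mulrAC ltr_pdivrMr // ltr_pM2l.
have Cz : C (p0 + (l / eta) *: d) by apply: H; rewrite divr_ge0 // ltW.
have -> : y + l *: d = (1 - eta) *: y' + (1 - (1 - eta)) *: (p0 + (l / eta) *: d).
  apply/matrixP => i k; rewrite /y' !mxE; field; rewrite ?gt_eqF //.
  by rewrite subr_gt0.
apply: Cc => //; lra.
Qed.

End Sep.

Arguments sub_convhull {R n}.
Arguments convhull_mono {R n}.
Arguments convhull_sub {R n}.
Arguments convhull_convex {R n}.
Arguments closure_convex {R n}.
Arguments dot {R n}.
Arguments separation {R n}.
Arguments dotD {R n}.
Arguments dotZ {R n}.
Arguments dotB {R n}.
Arguments dot_sum {R n}.
Arguments open_recc {R n}.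

Section Prob.
Variable R : realType.
Variables (m n : nat) (A : 'M[R]_(m, n)) (b : 'cV[R]_m) (f : 'I_m -> 'I_n).
Variable C : set 'cV[R]_n.
Hypothesis finj : injective f.
Hypothesis ABu : AB A f \in unitmx.
Local Notation V := 'cV[R]_n.
Local Notation xb := (xbar A b f).
Local Notation rb := (rbar A f).
Local Notation PBs := (PB A b f).

Lemma entB (p q : nat) (X Y : 'M[R]_(p, q)) i j : (X - Y) i j = X i j - Y i j.
Proof. by rewrite !mxE. Qed.

Lemma entD (p q : nat) (X Y : 'M[R]_(p, q)) i j : (X + Y) i j = X i j + Y i j.
Proof. by rewrite !mxE. Qed.

Lemma entZ (p q : nat) (a : R) (X : 'M[R]_(p, q)) i j : (a *: X) i j = a * X i j.
Proof. by rewrite !mxE. Qed.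

Definition nb (j : 'I_n) : bool := [pick i | f i == j] == None.

Lemma nonbasicE j : nonbasic f j <-> nb j.
Proof.
rewrite /nonbasic /basisB /nb; split.
  move=> nj; case: pickP => // i /eqP fij; exfalso; apply: nj; by exists i.
move=> /eqP h [i _ fij]; move: h; case: pickP => [x _ //|/(_ i)].
by rewrite fij eqxx.
Qed.

Definition Pmat : 'M[R]_(n, m) := \matrix_(k, i) (if f i == k then 1 else 0).

Lemma PmatE (w : 'cV[R]_m) k :
  (Pmat *m w) k 0 = if [pick i | f i == k] is Some i then w i 0 else 0.
Proof.
rewrite mxE; case: pickP => [i /eqP fik | none].
  rewrite (bigD1 i) //= mxE fik eqxx mul1r big1 ?addr0 // => i' ne.
  rewrite mxE; case: eqP => [fi'k|]; last by rewrite mul0r.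
  by exfalso; move/eqP: ne; apply; apply: finj; rewrite fi'k.
by rewrite big1 // => i _; rewrite mxE none mul0r.
Qed.

Lemma AP : A *m Pmat = AB A f.
Proof.
apply/matrixP => r i; rewrite !mxE (bigD1 (f i)) //= mxE eqxx mulr1 big1 ?addr0 //.
by move=> k nk; rewrite mxE eq_sym (negbTE nk) mulr0.
Qed.

Lemma xbarE : xb = Pmat *m bbar A b f.
Proof. by apply/matrixP => k j; rewrite (ord1 j) PmatE mxE. Qed.

Lemma Axb : A *m xb = b.
Proof. by rewrite xbarE mulmxA AP /bbar mulmxA mulmxV // mul1mx. Qed.

Lemma xb_nb k : nb k -> xb k 0 = 0.
Proof. by move=> /eqP nbk; rewrite mxE nbk. Qed.

Lemma rb_nb j k : nb k -> rb j k 0 = if k == j then 1 else 0.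
Proof. by move=> /eqP nbk; rewrite mxE nbk. Qed.

Lemma rbarE j : nb j ->
  rb j = \col_k (if k == j then 1 else 0) - Pmat *m (\col_i abar A f i j).
Proof.
move=> /eqP nbj; apply/matrixP => k c; rewrite (ord1 c) entB PmatE !mxE.
case: pickP => [i /eqP fik | none]; last by rewrite subr0.
rewrite mxE; case: eqP => [kj|_]; last by rewrite sub0r.
by move: nbj; case: pickP => // /(_ i); rewrite fik kj eqxx.
Qed.

Lemma Arb j : nb j -> A *m rb j = 0.
Proof.
move=> nbj; rewrite rbarE // mulmxBr mulmxA AP.
have h : AB A f *m abar A f = A by rewrite /abar mulmxA mulmxV // mul1mx.
have hr : forall r, \sum_i AB A f r i * (\col_i0 abar A f i0 j) i 0 = A r j.
  move=> r; rewrite -[RHS](congr1 (fun M : 'M[R]_(m, n) => M r j) h) mxE.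
  by apply: eq_bigr => i _; congr (_ * _); rewrite mxE.
apply/matrixP => r z; rewrite (ord1 z) !mxE.
rewrite hr; under eq_bigr do rewrite mxE.
rewrite (bigD1 j) //= eqxx mulr1 big1 ?addr0 ?subrr //.
by move=> k nk; rewrite (negbTE nk) mulr0.
Qed.

Lemma PB_xb : PBs xb.
Proof. by split; [exact: Axb | move=> k /nonbasicE nbk; rewrite xb_nb]. Qed.

Lemma PB_addsum p (kap : 'I_n -> R) : PBs p ->
  (forall j, ~~ nb j -> kap j = 0) -> (forall j, 0 <= kap j) ->
  PBs (p + \sum_j kap j *: rb j).
Proof.
move=> [Ap pnn] k0 kge; split.
  rewrite mulmxDr Ap mulmx_sumr big1 ?addr0 // => j _.
  have [nbj|nnbj] := boolP (nb j).
    by rewrite -scalemxAr Arb // scaler0.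
  by rewrite k0 // scale0r mulmx0.
move=> k nk; have nbk := proj1 (nonbasicE k) nk.
rewrite !mxE summxE; apply: addr_ge0; first exact: pnn.
apply: sumr_ge0 => j _; rewrite mxE rb_nb //; apply: mulr_ge0 => //.
by case: eqP.
Qed.

Lemma PB_add p j l : PBs p -> nb j -> 0 <= l -> PBs (p + l *: rb j).
Proof.
move=> Pp nbj l0.
have -> : l *: rb j = \sum_k (if k == j then l else 0) *: rb k.
  rewrite (bigD1 j) //= eqxx big1 ?addr0 // => k /negbTE ->; by rewrite scale0r.
apply: PB_addsum => // k; last by case: eqP.
by case: eqP => // ->; rewrite nbj.
Qed.

Definition mu (x : V) j := if nb j then x j 0 else 0.

Lemma PB_decomp x : PBs x -> x = xb + \sum_j mu x j *: rb j.
Proof.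
move=> [Ax xnn].
set y := xb + _.
have Ay : A *m y = b.
  rewrite /y mulmxDr Axb mulmx_sumr big1 ?addr0 // => j _.
  rewrite /mu; have [nbj|nnbj] := boolP (nb j).
    by rewrite -scalemxAr Arb // scaler0.
  by rewrite scale0r mulmx0.
have yk : forall k, nb k -> y k 0 = x k 0.
  move=> k nbk; rewrite /y entD summxE xb_nb // add0r (bigD1 k) //= entZ rb_nb //.
  rewrite eqxx mulr1 /mu nbk big1 ?addr0 // => j njk.
  by rewrite entZ rb_nb // eq_sym (negbTE njk) mulr0.
set z := x - y.
have Az : A *m z = 0 by rewrite mulmxBr Ax Ay subrr.
have zE : z = Pmat *m (\col_i z (f i) 0).
  apply/matrixP => k c; rewrite (ord1 c) PmatE.
  case: pickP => [i /eqP <- | none]; first by rewrite [RHS]mxE.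
  have nbk : nb k by rewrite /nb; case: pickP => // i; rewrite none.
  by rewrite /z entB yk // subrr.
have w0 : (\col_i z (f i) 0 : 'cV[R]_m) = 0.
  have : AB A f *m (\col_i z (f i) 0) = 0 by rewrite -AP -mulmxA -zE Az.
  move/(congr1 (mulmx (invmx (AB A f)))); rewrite mulmxA mulVmx // mul1mx mulmx0.
  done.
have : z = 0 by rewrite zE w0 mulmx0.
by move/eqP; rewrite subr_eq0 => /eqP.
Qed.

Hypothesis Copen : open C.
Hypothesis Cconv : is_convex C.
Hypothesis Hxc : ~ closure C xb.

Local Notation al := (alpha A b f C).
Local Notation be := (beta A b f C).

Lemma xb_notC : ~ C xb.
Proof. by move=> Cx; apply: Hxc; apply: subset_closure. Qed.

Lemma rb_neq0 j : nb j -> rb j != 0.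
Proof.
move=> nbj; apply/eqP => h; have := congr1 (fun M : 'cV[R]_n => M j 0) h.
by rewrite rb_nb // eqxx mxE => /eqP; rewrite oner_eq0.
Qed.

Lemma alpha_gt0 j : nb j -> (0 < al j)%E.
Proof.
move=> nbj.
have [B [nB hB]] : exists B, nbhs xb B /\ ~ (C `&` B !=set0).
  apply: contrapT => H; apply: Hxc => B nB; apply: contrapT => h; apply: H; by exists B.
move/nbhs_ballP: nB => [e /= e0 eB].
have r0 : 0 < `|rb j| by rewrite normr_gt0 rb_neq0.
apply: (@lt_le_trans _ _ (e / `|rb j|)%:E); first by rewrite lte_fin divr_gt0.
apply/ereal_infP => _ [l [l0 Cl] <-]; rewrite lee_fin.
rewrite leNgt; apply/negP => hl.
apply: hB; exists (xb + l *: rb j); split => //; apply: eB.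
rewrite -ball_normE /= opprD addrA subrr add0r normrN normrZ ger0_norm //.
by rewrite -ltr_pdivlMr.
Qed.

Lemma alpha_lt j l : 0 <= l -> C (xb + l *: rb j) -> (al j < l%:E)%E.
Proof.
move=> l0 Cl.
have l_pos : 0 < l.
  rewrite lt_neqAle l0 andbT; apply/eqP => l0'.
  by apply: xb_notC; move: Cl; rewrite -l0' scale0r addr0.
have nC : nbhs (xb + l *: rb j) C by have := Copen; rewrite openE => /(_ _ Cl).
move/nbhs_ballP: nC => [e /= e0 eB].
set a := `|rb j|.
have a0 : 0 <= a := normr_ge0 _.
set k := e / (a + 1).
have a1 : 0 < a + 1 by rewrite ltr_wpDl.
have k0 : 0 < k by rewrite divr_gt0.
have ke : k * (a + 1) = e by rewrite /k divfK // gt_eqF.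
set eta := Num.min l k / 2.
have hmin1 : Num.min l k <= l by rewrite ge_min lexx.
have hmin2 : Num.min l k <= k by rewrite ge_min lexx orbT.
have hmin0 : 0 < Num.min l k by rewrite lt_min l_pos k0.
have eta0 : 0 < eta by rewrite divr_gt0.
have etal : eta < l by rewrite /eta; lra.
have etak : eta <= k / 2 by rewrite /eta; lra.
have etaa : eta * a < e by nra.
have Cl' : C (xb + (l - eta) *: rb j).
  apply: eB; rewrite -ball_normE /=.
  have -> : xb + l *: rb j - (xb + (l - eta) *: rb j) = eta *: rb j.
    by apply/matrixP => i c; rewrite !mxE; ring.
  by rewrite normrZ gtr0_norm.
apply: (@le_lt_trans _ _ (l - eta)%:E); last by rewrite lte_fin; lra.
apply: ereal_inf_lbound; exists (l - eta) => //; split => //; lra.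
Qed.

Lemma beta_pinfty j l0 : 0 <= l0 -> (forall l, l0 <= l -> C (xb + l *: rb j)) ->
  be j = +oo%E.
Proof.
move=> l00 H.
have ub : forall r : R, (r%:E <= be j)%E.
  move=> r; apply: (@le_trans _ _ (Num.max l0 r)%:E); first by rewrite lee_fin le_max lexx orbT.
  apply: ereal_sup_ubound; exists (Num.max l0 r) => //; split.
  - by rewrite le_max l00.
  - by apply: H; rewrite le_max lexx.
move: ub; case: (be j) => [r| |] // ub.
  by have := ub (r + 1)%R; rewrite lee_fin => h; exfalso; lra.
by have := ub 0%R; rewrite leeNy_eq.
Qed.

Lemma seg_in_C j l : (al j < l%:E)%E -> (l%:E < be j)%E -> C (xb + l *: rb j).
Proof.
move=> /ereal_inf_lt [_ [l1 [l10 Cl1] <-] l1l] /ereal_sup_gt [_ [l2 [l20 Cl2] <-] ll2].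
rewrite lte_fin in l1l; rewrite lte_fin in ll2.
have h21 : 0 < l2 - l1 by lra.
set t := (l2 - l) / (l2 - l1).
have t0 : 0 <= t by rewrite /t divr_ge0 //; lra.
have t1 : t <= 1 by rewrite /t ler_pdivrMr // mul1r; lra.
have -> : xb + l *: rb j = t *: (xb + l1 *: rb j) + (1 - t) *: (xb + l2 *: rb j).
  apply/matrixP => i c; rewrite !mxE /t; field; by rewrite gt_eqF.
exact: Cconv.
Qed.

Lemma TC_sub : TC A b f C `<=` C.
Proof.
move=> _ [t [v hv <-] [d dr <-]].
have Cv : C (xb + v).
  suff : [set u | C (xb + u)] v by [].
  apply: (convhull_sub _ [set u | C (xb + u)] _ _ v hv).
    move=> u1 u2 s U1 U2 s0 s1 /=.
    have -> : xb + (s *: u1 + (1 - s) *: u2) = s *: (xb + u1) + (1 - s) *: (xb + u2).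
      by apply/matrixP => i c; rewrite !mxE; ring.
    exact: Cconv.
  move=> u [j [l [_ h1 h2 ->]]]; exact: seg_in_C.
by have := dr _ 1 Cv ler01; rewrite scale1r.
Qed.

Lemma RC_sub : RC A b f C `<=` TC A b f C.
Proof.
move=> _ [t [v hv <-] [d dr <-]]; exists (xb + v); last by exists d.
exists v => //; apply: (convhull_mono _ _ _ v hv) => u [j [l [N1j h1 h2 ->]]].
by exists j, l; split => //; left.
Qed.

Lemma hard x : PBs x -> ~ RC A b f C x -> closure (convhull (PBs `\` C)) x.
Proof.
move=> PBx nRC; apply: contrapT => nXx.
have xbD : (PBs `\` C) xb by split; [exact: PB_xb | exact: xb_notC].
have [c hc] := separation _ x xb (@closed_closure _ _)
  (closure_convex _ (convhull_convex (PBs `\` C)))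
  (subset_closure (sub_convhull _ _ xbD)) nXx.
have hD : forall p, PBs p -> ~ C p -> dot c x < dot c p.
  move=> p Pp nCp; apply: hc; apply: subset_closure; exact: (sub_convhull _ p (conj Pp nCp)).
have F1 : forall p, PBs p -> dot c p <= dot c x -> C p.
  move=> p Pp le; apply: contrapT => nCp; have := hD p Pp nCp; by rewrite ltNge le.
have del0 : 0 < dot c xb - dot c x by rewrite subr_gt0; apply: hD; [exact: PB_xb | exact: xb_notC].
set gam := dot c x in hD F1 del0 *.
set del := dot c xb - gam in del0 *.
have mu0 : forall j, 0 <= mu x j.
  move=> j; rewrite /mu; case: ifP => // nbj; case: PBx => _; apply; exact/nonbasicE.
have mu_nb : forall j, ~~ nb j -> mu x j = 0 by move=> j /negbTE nbj; rewrite /mu nbj.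
have xE := PB_decomp x PBx.
have sumE : \sum_j mu x j * dot c (rb j) = - del.
  have : gam = dot c xb + \sum_j mu x j * dot c (rb j).
    rewrite /gam {1}xE dotD dot_sum; congr (_ + _); apply: eq_bigr => j _.
    by rewrite dotZ.
  rewrite /del => ->; ring.
pose S j := nb j && (dot c (rb j) < 0).
pose s := \sum_j (if S j then mu x j * (- dot c (rb j)) else 0).
have sdel : del <= s.
  have split_sum : \sum_j mu x j * dot c (rb j) = \sum_j (if S j then mu x j * dot c (rb j) else 0)
      + \sum_j (if S j then 0 else mu x j * dot c (rb j)).
    by rewrite -big_split; apply: eq_bigr => j _ /=; case: (S j); rewrite ?addr0 ?add0r.
  have h2 : 0 <= \sum_j (if S j then 0 else mu x j * dot c (rb j)).
    apply: sumr_ge0 => j _; case Sj: (S j) => //.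
    have [nbj|nnbj] := boolP (nb j); last by rewrite mu_nb // mul0r.
    apply: mulr_ge0 (mu0 j) _; move: Sj; rewrite /S nbj /= => /negbT.
    by rewrite -leNgt.
  have h3 : s = - \sum_j (if S j then mu x j * dot c (rb j) else 0).
    rewrite /s -sumrN; apply: eq_bigr => j _; by case: (S j); rewrite ?mulrN ?oppr0.
  lra.
have [j0 Sj0] : exists j0, S j0.
  apply: contrapT => hn.
  have : s = 0.
    rewrite /s big1 // => j _; case Sj: (S j) => //; exfalso; apply: hn; by exists j.
  lra.
pose lam j := del / (- dot c (rb j)).
have Sprop : forall j, S j ->
    [/\ nb j, dot c (rb j) < 0, 0 < lam j & dot c (xb + lam j *: rb j) = gam].
  move=> j /andP[nbj cj0]; split => //; first by rewrite divr_gt0 // oppr_gt0.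
  rewrite dotD dotZ /lam /del; field; by rewrite lt_eqF.
have ray : forall j, S j -> forall l, lam j <= l -> C (xb + l *: rb j).
  move=> j Sj l hl; have [nbj cj0 lam0 dlam] := Sprop j Sj.
  apply: F1; first by apply: PB_add => //; [exact: PB_xb | lra].
  move: dlam; rewrite !dotD !dotZ => dlam.
  nra.
have segok : forall j, S j -> segs A b f C (N1 A b f C) (lam j *: rb j).
  move=> j Sj; have [nbj cj0 lam0 dlam] := Sprop j Sj.
  have Cl := ray j Sj (lam j) (lexx _).
  have bpinf : be j = +oo%E := beta_pinfty j (lam j) (ltW lam0) (ray j Sj).
  exists j, (lam j); split => //.
  - split; first exact/nonbasicE.
    split; last exact: bpinf.
    apply/andP; split; first exact: alpha_gt0.
    exact: lt_trans (alpha_lt j (lam j) (ltW lam0) Cl) (ltry _).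
  - exact: alpha_lt j (lam j) (ltW lam0) Cl.
  - by rewrite bpinf ltry.
have s0 : 0 < s by lra.
pose w j := if S j then mu x j * (- dot c (rb j)) / s else 0.
pose pt j := if S j then lam j *: rb j else lam j0 *: rb j0.
pose v := \sum_j w j *: pt j.
have hv : convhull (segs A b f C (N1 A b f C)) v.
  exists n, pt, w; split => //.
  - by move=> j; rewrite /pt; case: ifP => Sj; apply: segok.
  - move=> j; rewrite /w; case: ifP => // /andP[nbj cj0].
    apply: divr_ge0; last exact: ltW.
    by apply: mulr_ge0; [exact: mu0 | rewrite oppr_ge0 ltW].
  - have -> : \sum_j w j = s / s.
      rewrite /s mulr_suml; apply: eq_bigr => j _; rewrite /w.
      by case: (S j); rewrite ?mul0r.
    by rewrite divff // gt_eqF.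
pose nu j := if S j then mu x j * del / s else 0.
have hv2 : v = \sum_j nu j *: rb j.
  rewrite /v; apply: eq_bigr => j _; rewrite /w /pt /nu.
  case Sj: (S j); last by rewrite !scale0r.
  have [nbj cj0 _ _] := Sprop j Sj.
  rewrite scalerA; congr (_ *: _); rewrite /lam.
  field; rewrite ?oppr_eq0 ?(lt_eqF cj0) ?(gt_eqF s0) //.
have dv : dot c v = - del.
  rewrite hv2 dot_sum.
  have -> : \sum_j dot c (nu j *: rb j) =
      del / s * \sum_j (if S j then mu x j * dot c (rb j) else 0).
    rewrite mulr_sumr; apply: eq_bigr => j _; rewrite dotZ /nu.
    by case: (S j); rewrite ?mul0r ?mulr0 //; ring.
  have -> : \sum_j (if S j then mu x j * dot c (rb j) else 0) = - s.
    rewrite /s -sumrN; apply: eq_bigr => j _; by case: (S j); rewrite ?mulrN ?opprK ?oppr0.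
  by rewrite mulrN divfK // gt_eqF.
pose d := x - (xb + v).
have dE : d = \sum_j (mu x j - nu j) *: rb j.
  rewrite /d {1}xE hv2 opprD addrACA subrr add0r -sumrB.
  by apply: eq_bigr => j _; rewrite scalerBl.
have kap0 : forall j, 0 <= mu x j - nu j.
  move=> j; rewrite /nu; case Sj: (S j); last by rewrite subr0.
  rewrite subr_ge0 ler_pdivrMr //; have := mu0 j; nra.
have kap_nb : forall j, ~~ nb j -> mu x j - nu j = 0.
  by move=> j nbj; rewrite mu_nb // /nu /S (negbTE nbj) /= subr0.
have hd : recc C d.
  apply: (open_recc C (xb + lam j0 *: rb j0) d Copen Cconv) => t t0.
  have [nbj0 cj00 lam00 dlam0] := Sprop j0 Sj0.
  apply: F1.
    rewrite dE scaler_sumr.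
    have -> : \sum_j t *: ((mu x j - nu j) *: rb j) = \sum_j (t * (mu x j - nu j)) *: rb j.
      by apply: eq_bigr => j _; rewrite scalerA.
    apply: PB_addsum.
    - by apply: PB_add => //; [exact: PB_xb | exact: ltW].
    - by move=> j nbj; rewrite kap_nb // mulr0.
    - by move=> j; apply: mulr_ge0.
  rewrite dotD dotZ dlam0.
  have -> : dot c d = 0.
    rewrite /d dotB dotD dv; rewrite /del /gam; ring.
  by rewrite mulr0 addr0.
apply: nRC; exists (xb + v); first by exists v.
by exists d => //; rewrite /d addrC subrK.
Qed.

Lemma main_prob :
  closure (convhull (PBs `\` C)) = closure (convhull (PBs `\` TC A b f C)) /\
  closure (convhull (PBs `\` C)) = closure (convhull (PBs `\` RC A b f C)).
Proof.
have s01 : PBs `\` C `<=` PBs `\` TC A b f C.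
  by move=> p [Pp nCp]; split => // /TC_sub.
have s12 : PBs `\` TC A b f C `<=` PBs `\` RC A b f C.
  by move=> p [Pp nTp]; split => // /RC_sub.
have s2X : PBs `\` RC A b f C `<=` closure (convhull (PBs `\` C)).
  by move=> p [Pp nRp]; exact: hard.
have Xcl : closed (closure (convhull (PBs `\` C))) := @closed_closure _ _.
have Xcv := closure_convex _ (convhull_convex (PBs `\` C)).
have E := proj1 (closure_id _) Xcl.
have c01 := closureS (convhull_mono _ _ s01).
have c12 := closureS (convhull_mono _ _ s12).
have c2 : closure (convhull (PBs `\` RC A b f C)) `<=` closure (convhull (PBs `\` C)).
  apply: (subset_trans (closureS (convhull_sub _ _ Xcv s2X))).
  by rewrite -E.
split; apply/seteqP; split => //.
- exact: subset_trans c12 c2.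
- exact: subset_trans c01 c12.
Qed.

End Prob.

Theorem theorem2 (R : realType) (m n : nat) (A : 'M[R]_(m, n)) (b : 'cV[R]_m)
    (f : 'I_m -> 'I_n) (C : set 'cV[R]_n) :
  \rank A = m ->
  injective f ->
  AB A f \in unitmx ->
  (forall i, 0 <= bbar A b f i 0) ->
  open C -> is_convex C ->
  ~ closure C (xbar A b f) ->
  closure (convhull (PB A b f `\` C)) = closure (convhull (PB A b f `\` TC A b f C)) /\
  closure (convhull (PB A b f `\` C)) = closure (convhull (PB A b f `\` RC A b f C)).
Proof.
move=> _ finj ABu _ Copen Cconv Hxc.
by apply: main_prob.
Qed.
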